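(* A metrizable topological space $X$ is separable if and only if $C(X)$ has the countable sup property.
   Context: $C(X)$ is the vector lattice of all real-valued continuous functions on $X$ with the pointwise order. A vector lattice has the countable sup property if every nonempty subset possessing a supremum contains a countable subset with the same supremum. *)

(* Defs.v *)
From HB Require Import structures.
From mathcomp Require Import all_boot all_order all_algebra.
From mathcomp Require Import all_classical all_reals topology normedtype.
Set Implicit Arguments. Unset Strict Implicit. Unset Printing Implicit Defensive.
Import Order.TTheory GRing.Theory Num.Theory.
Local Open Scope classical_set_scope.
Local Open Scope ring_scope.
Import numFieldNormedType.Exports.

Definition metrizable (R : realType) (X : topologicalType) : Prop :=
  exists d : X -> X -> R,
    [/\ (forall x y, 0 <= d x y),
        (forall x y, d x y = 0 <-> x = y),
        (forall x y, d x y = d y x),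
        (forall x y z, d x z <= d x y + d y z) &
        (forall A : set X, open A <->
           (forall x, A x -> exists2 e : R, 0 < e & forall y, d x y < e -> A y))].

Definition separable_space (X : topologicalType) : Prop :=
  exists D : set X, countable D /\ closure D = setT.

Definition Ccont (R : realType) (X : topologicalType) : set (X -> R) :=
  [set f | continuous (f : X -> R^o)].

Definition le_pw (R : realType) (X : Type) (f g : X -> R) : Prop :=
  forall x, f x <= g x.

Definition is_sup_C (R : realType) (X : topologicalType)
    (S : set (X -> R)) (f : X -> R) : Prop :=
  [/\ @Ccont R X f,
      (forall g, S g -> le_pw g f) &
      (forall h, @Ccont R X h -> (forall g, S g -> le_pw g h) -> le_pw f h)].

Definition countable_sup_property (R : realType) (X : topologicalType) : Prop :=
  forall (S : set (X -> R)) (f : X -> R),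
    S `<=` @Ccont R X -> S !=set0 -> is_sup_C S f ->
    exists T : set (X -> R), [/\ T `<=` S, countable T & is_sup_C T f].

(* Main.v *)
Require Import Defs.
From HB Require Import structures.
From mathcomp Require Import all_boot all_order all_algebra.
From mathcomp Require Import all_classical all_reals topology normedtype.
From mathcomp Require Import ring lra.
Set Implicit Arguments. Unset Strict Implicit. Unset Printing Implicit Defensive.
Import Order.TTheory GRing.Theory Num.Theory.
Local Open Scope classical_set_scope.
Local Open Scope ring_scope.
Import numFieldNormedType.Exports.

Definition mopen (R : realType) (X : topologicalType) (d : X -> X -> R) :=
  forall A : set X, open A <->
    (forall x, A x -> exists2 e : R, 0 < e & forall y, d x y < e -> A y).

Lemma lip_cont (R : realType) (X : topologicalType) (d : X -> X -> R)
  (hd : mopen d) (f : X -> R) (k : R) : 0 < k ->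
  (forall x y, `|f x - f y| <= d x y * k) -> continuous (f : X -> R^o).
Proof.
move=> k0 H; apply/continuousP => A oA; apply/hd => x /= Afx.
have : nbhs (f x : R^o) A by apply: open_nbhs_nbhs; split.
move/nbhs_ballP => [e /= e0 sub].
exists (e / k); first by rewrite divr_gt0.
move=> y dy; apply: sub; rewrite -ball_normE /=.
apply: (le_lt_trans (H x y)).
by rewrite -ltr_pdivlMr.
Qed.

Lemma max0_lip (R : realType) (u v : R) :
  `|Num.max 0 u - Num.max 0 v| <= `|u - v|.
Proof.
have h1 := ler_norm (u - v); have h2 := ler_norm (v - u).
rewrite distrC in h2.
rewrite !maxEle; case: ifP => hu; case: ifP => hv; rewrite ler_norml;
  apply/andP; split; lra.
Qed.

Lemma min1_lip (R : realType) (u v : R) :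
  `|Num.min 1 u - Num.min 1 v| <= `|u - v|.
Proof.
have h1 := ler_norm (u - v); have h2 := ler_norm (v - u).
rewrite distrC in h2.
rewrite !minEle; case: ifP => hu; case: ifP => hv; rewrite ler_norml;
  apply/andP; split; lra.
Qed.
Lemma ball_nbhs (R : realType) (X : topologicalType) (d : X -> X -> R)
  (hd : mopen d) (dxx : forall x, d x x = 0)
  (dT : forall x y z, d x z <= d x y + d y z) (x : X) (r : R) :
  0 < r -> nbhs x [set y | d x y < r].
Proof.
move=> r0; apply: open_nbhs_nbhs; split; last by rewrite /= dxx.
apply/hd => y /= hy; exists (r - d x y); first by lra.
move=> z hz; have := dT x y z; lra.
Qed.

Lemma archi2 (R : realType) (e : R) : 0 < e -> exists n : nat, 2 < e * n.+1%:R.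
Proof.
move=> e0; exists (Num.Def.archi_bound (2 / e)).
have := archi_boundP (ltW (divr_gt0 (ltr0n _ 2) e0)).
rewrite ltr_pdivrMr // mulrC => h; apply: (lt_trans h).
by rewrite ltr_pM2l // ltr_nat.
Qed.

Lemma fwd (R : realType) (X : topologicalType) (d : X -> X -> R)
  (hd : mopen d) (dxx : forall x, d x x = 0) (dS : forall x y, d x y = d y x)
  (dT : forall x y z, d x z <= d x y + d y z) :
  separable_space X -> countable_sup_property R X.
Proof.
move=> [D [cD clD]] S f SC [g0 Sg0] [fC fub fleast].
pose A (i : X * nat * rat) := [set g | S g /\ exists y,
   d i.1.1 y * i.1.2.+1%:R < 1 /\ ratr i.2 < g y].
pose c i := xget g0 (A i).
have cS i : S (c i).
  have [[g Ag]|nA] := pselect (exists g, A i g).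
    by have [] := xgetPex g0 (ex_intro _ g Ag).
  by rewrite /c xgetPN //; move=> g Ag; apply: nA; exists g.
exists (c @` (D `*` setT `*` setT)); split.
- by move=> g [i _ <-].
- apply: sub_countable (card_image_le c _) _.
  by apply: countableX; [apply: countableX => //; apply: countableP|apply: countableP].
split => //.
  by move=> g [i _ <-]; apply: fub.
move=> h hC hT; apply: fleast => // g Sg x.
rewrite leNgt; apply/negP => hgx.
have [q] := rat_in_itvoo hgx; rewrite in_itv /= => /andP[hq1 hq2].
have oU : open [set z | h z < ratr q].
  by have := (proj1 (continuousP _)) hC _ (@open_lt _ (ratr q)).
have [e e0 He] := (proj1 (hd _)) oU x hq1.
have [m hm] := archi2 e0.
have k0 : (0 : R) < m.+1%:R by rewrite ltr0n.
have kk : (m.+1%:R : R) * (m.+1%:R)^-1 = 1 by rewrite mulfV // gt_eqF.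
have nb : nbhs x [set y | d x y < (m.+1%:R : R)^-1].
  by apply: (ball_nbhs hd dxx dT); rewrite invr_gt0.
have : closure D x by rewrite clD.
move=> /(_ _ nb) [z [Dz /= dxz]].
set k := (m.+1%:R : R) in k0 kk dxz hm *.
have dxz' : d x z * k < 1 by rewrite -ltr_pdivlMr // div1r.
have Ai : A (z, m, q) g.
  split => //; exists x; split => //=; by rewrite dS.
have [_ [y [/= dzy qy]]] := xgetPex g0 (ex_intro _ g Ai).
have hy : c (z, m, q) y <= h y by apply: hT; exists (z, m, q).
have : h y < ratr q.
  apply: He; have := dT x z y => t.
  have : (d x y - e) * k < 0 by nra.
  by rewrite pmulr_llt0 // subr_lt0.
rewrite /c in hy; lra.
Qed.

Lemma bwd (R : realType) (X : topologicalType) (d : X -> X -> R)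
  (hd : mopen d) (dxx : forall x, d x x = 0) (d0 : forall x y, 0 <= d x y)
  (dS : forall x y, d x y = d y x)
  (dT : forall x y z, d x z <= d x y + d y z) :
  countable_sup_property R X -> separable_space X.
Proof.
move=> csp.
have [[x0 _]|X0] := pselect (exists x : X, True); last first.
  exists set0; split; first exact: countable0.
  rewrite closure0; apply/seteqP; split => // y _; exfalso; apply: X0; by exists y.
have dlip x y z : `|d x y - d x z| <= d y z.
  have := dT x y z; have := dT x z y; rewrite (dS z y) => t1 t2.
  rewrite ler_norml; apply/andP; split; lra.
pose gb (n : nat) (x : X) (z : X) : R := Num.max 0 (1 - d x z * n.+1%:R).
pose one : X -> R := fun=> 1.
have gbC n x : Ccont (gb n x).
  apply: (lip_cont hd (k := n.+1%:R)); first by rewrite ltr0n.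
  move=> y z; apply: (le_trans (max0_lip _ _)).
  have -> : (1 - d x y * n.+1%:R) - (1 - d x z * n.+1%:R) =
    (d x z - d x y) * n.+1%:R by ring.
  rewrite normrM (gtr0_norm (ltr0n _ _ : (0:R) < n.+1%:R)) distrC.
  by rewrite ler_pM2r ?ltr0n // dlip.
have gb1 n x z : gb n x z <= 1.
  rewrite /gb ge_max ler01 /=; have := d0 x z; have : (0:R) < n.+1%:R by rewrite ltr0n.
  nra.
have gbxx n x : gb n x x = 1 by rewrite /gb dxx mul0r subr0 maxEle ler01.
have supn n : exists T : set (X -> R),
    [/\ T `<=` range (gb n), countable T & is_sup_C T one].
  have [] := csp (range (gb n)) one.
  - by move=> g [x _ <-].
  - by exists (gb n x0), x0.
  - split; first exact: cst_continuous.
      by move=> g [x _ <-] z; apply: gb1.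
    by move=> h hC hS x; rewrite /one -(gbxx n x); apply: hS; exists x.
  by move=> T [] *; exists T.
have [Tf HT] := choice supn.
pose p n (t : X -> R) := xget x0 [set x | gb n x = t].
exists (\bigcup_(n in setT) (p n @` Tf n)); split.
  apply: bigcup_countable; first exact: countableP.
  move=> n _; apply: sub_countable (card_image_le _ _) _.
  by have [] := HT n.
apply/seteqP; split => // y _.
move=> B; rewrite nbhsE => -[U [oU Uy] UB].
have [e e0 He] := (proj1 (hd _)) oU y Uy.
have [n hn] := archi2 e0.
have k0 : (0 : R) < n.+1%:R by rewrite ltr0n.
set k := (n.+1%:R : R) in k0 hn.
have [[t [Tt ht]]|nt] := pselect (exists t, Tf n t /\ d (p n t) y * k < 2).
  exists (p n t); split; first by exists n => //; exists t.
  apply: UB; apply: He; rewrite dS.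
  have : (d (p n t) y - e) * k < 0 by nra.
  by rewrite pmulr_llt0 // subr_lt0.
exfalso.
pose h (z : X) : R := Num.min 1 (d z y * k).
have hC : Ccont h.
  apply: (lip_cont hd (k := k)) => // z w.
  apply: (le_trans (min1_lip _ _)).
  rewrite -mulrBl normrM (gtr0_norm k0).
  rewrite ler_pM2r // -(dS y z) -(dS y w); exact: dlip.
have [HTs _ [_ _ Hl]] := HT n.
have ub : forall g, Tf n g -> le_pw g h.
  move=> g Tg z.
  have [x _ gx] := HTs g Tg.
  have pg : gb n (p n g) = g.
    by have := xgetPex x0 (ex_intro (fun x => gb n x = g) x gx).
  rewrite -pg /gb /h ge_max le_min ler01 /=.
  rewrite (mulr_ge0 (d0 _ _) (ltW k0)) /=.
  rewrite le_min; apply/andP; split.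
    by rewrite lerBlDr lerDl mulr_ge0 ?d0 ?ltW.
  have nlt : ~ (d (p n g) y * k < 2) by move=> hl; apply: nt; exists g.
  have t2 : 2 <= d (p n g) y * k by rewrite leNgt; apply/negP.
  have := dT (p n g) z y; nra.
have := Hl h hC ub y.
rewrite /one /h dxx mul0r minEle ler10 /=; lra.
Qed.

Theorem corollary4p9 (R : realType) (X : topologicalType) :
  metrizable R X -> (separable_space X <-> countable_sup_property R X).
Proof.
move=> [d [d0 dE dS dT hd]].
have dxx x : d x x = 0 by apply/dE.
split; [exact: (fwd hd dxx dS dT) | exact: (bwd hd dxx d0 dS dT)].
Qed.
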